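(* Let $N\ge1$, and for a parameter vector $h=(h_\alpha,h_\beta,h_1,\dots,h_{N-1})\in\mathbb{R}^{N+1}$ consider the linear system $\dot{\mathbf x}=A(h)\mathbf x+B\delta(t)$, $y=C\mathbf x$, with $A(h)$ as in the context, $B=e_1$ and $C=e_2^T$, whose input–output behaviour is the transfer function $G_h(s)=C(sI-A(h))^{-1}B$ (equivalently the impulse response $y_h(t)=Ce^{A(h)t}B$, $t\ge0$). Then there is a Lebesgue-null set $\mathcal{Z}\subset\mathbb{R}^{N+1}$ such that for all $h,h'\notin\mathcal Z$ with known (designed) sensor couplings $h_\alpha=h'_\alpha$, $h_\beta=h'_\beta$, the equality $G_h(s)=G_{h'}(s)$ (for all $s$) implies $|h_i|=|h'_i|$ for all $i=1,\dots,N-1$. That is, the magnitudes of the chain couplings $h_1,\dots,h_{N-1}$ are uniquely determined by the measurement record of $Z_\alpha Y_\beta$ with initial state $\rho^x_\alpha\otimes\frac I2$.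
   Context: For an integer $N\ge1$ and real parameters $h=(h_\alpha,h_\beta,h_1,\dots,h_{N-1})$, set $(c_1,c_2,c_3,\dots,c_{N+1})=(h_\alpha,h_\beta,h_1,\dots,h_{N-1})$ and let $A(h)$ be the real $(N+2)\times(N+2)$ tridiagonal matrix with $A_{j,j+1}=c_j$, $A_{j+1,j}=-c_j$ for $j=1,\dots,N+1$ and all other entries zero. $e_j$ denotes the $j$-th standard basis column vector. Physically, this is the Heisenberg-picture dynamics $\frac{d}{dt}\langle O\rangle=\langle \mathrm{i}[H,O]\rangle$ of the expectation vector $\mathbf x=(\langle X_\alpha\rangle,\langle Z_\alpha Y_\beta\rangle,\langle Z_\alpha Z_\beta X_1\rangle,\langle Z_\alpha Z_\beta Z_1Y_2\rangle,\dots)$ for the chain of qubits $\alpha,\beta,1,\dots,N$ with Hamiltonian $H=\frac{h_\alpha}{2}(X_\alpha X_\beta+Y_\alpha Y_\beta)+\frac{h_\beta}{2}(X_\beta X_1+Y_\beta Y_1)+\sum_{k=1}^{N-1}\frac{h_k}{2}(X_kX_{k+1}+Y_kY_{k+1})$, where $X,Y,Z$ are Pauli matrices and $\rho^x_\alpha=(I+X)/2$ on qubit $\alpha$. *)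

(* Defs.v *)
From Stdlib Require Import Reals Lra Lia.
Open Scope R_scope.

(* Vectors are functions nat -> R; only the first d coordinates matter
   for a vector in R^d.  Indices are 0-based. *)

Fixpoint rsum (n : nat) (f : nat -> R) : R :=
  match n with O => 0 | S m => rsum m f + f m end.

Fixpoint rprod (n : nat) (f : nat -> R) : R :=
  match n with O => 1 | S m => rprod m f * f m end.

Definition lebesgue_null (d : nat) (Z : (nat -> R) -> Prop) : Prop :=
  forall eps : R, 0 < eps ->
    exists a b : nat -> nat -> R,
      (forall k i, (i < d)%nat -> a k i <= b k i) /\
      (forall M : nat,
          rsum M (fun k => rprod d (fun i => b k i - a k i)) < eps) /\
      (forall h, Z h -> exists k, forall i, (i < d)%nat -> a k i <= h i <= b k i).

(* The (N+2)x(N+2) tridiagonal matrix A(h), 0-based: with the parameter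
   vector h = (h_alpha, h_beta, h_1, ..., h_{N-1}) stored as h 0, h 1, h 2, ...,
   h N, i.e. c_{j+1} = h j, we have A_{j,j+1} = h j and A_{j+1,j} = - h j. *)
Definition Amat (h : nat -> R) (j k : nat) : R :=
  if Nat.eqb k (S j) then h j
  else if Nat.eqb j (S k) then - h k
  else 0.

Definition sIA (N : nat) (h : nat -> R) (s : R) (x : nat -> R) (j : nat) : R :=
  s * x j - rsum (N + 2) (fun k => Amat h j k * x k).

Definition resolvent_defined (N : nat) (h : nat -> R) (s : R) : Prop :=
  forall x : nat -> R,
    (forall j, (j < N + 2)%nat -> sIA N h s x j = 0) ->
    forall j, (j < N + 2)%nat -> x j = 0.

(* G_h(s) = y, where G_h(s) = C (sI - A(h))^{-1} B with B = e_1, C = e_2^T: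
   y = x_2 for the solution x of (sI - A(h)) x = e_1 (0-based: x 1, e_0). *)
Definition transfer_value (N : nat) (h : nat -> R) (s y : R) : Prop :=
  exists x : nat -> R,
    (forall j, (j < N + 2)%nat -> sIA N h s x j = if Nat.eqb j 0 then 1 else 0) /\
    y = x 1%nat.

Definition same_transfer (N : nat) (h h' : nat -> R) : Prop :=
  forall s : R, resolvent_defined N h s -> resolvent_defined N h' s ->
    forall y : R, transfer_value N h s y <-> transfer_value N h' s y.

(* Main.v *)
Require Import Defs.
From Stdlib Require Import Reals Lra Lia.
Open Scope R_scope.

Fixpoint U (h : nat -> R) (s : R) (k j : nat) : R :=
  match k with O => 0 | S k' => - (h j * h j) / (s - U h s k' (S j)) end.

Definition uu (N : nat) h s j := U h s (N + 1 - j) j.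

Lemma div_help c d s : 0 <= c -> 0 < s -> s <= d -> - c / s <= - c / d <= 0.
Proof.
  intros Hc Hs Hd. unfold Rdiv.
  assert (H1 : / d <= / s) by (apply Rinv_le_contravar; lra).
  assert (H2 : 0 < / d) by (apply Rinv_0_lt_compat; lra).
  split; nra.
Qed.

Lemma U_bound h s : 0 < s -> forall k j, - (h j * h j) / s <= U h s k j <= 0.
Proof.
  intros Hs k; induction k as [|k IH]; intros j; simpl.
  - split; [|lra]. assert (H := div_help (h j * h j) s s). 
    assert (0 <= h j * h j) by nra. specialize (H H0 Hs (Rle_refl _)). lra.
  - apply div_help; [nra|lra|]. specialize (IH (S j)). lra.
Qed.

Lemma uu_rec N h s j : (j <= N)%nat -> uu N h s j = - (h j * h j) / (s - uu N h s (S j)).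
Proof.
  intros Hj. unfold uu. replace (N + 1 - j)%nat with (S (N + 1 - S j)) by lia. reflexivity.
Qed.

Lemma uu_last N h s : uu N h s (S N) = 0.
Proof. unfold uu. replace (N + 1 - S N)%nat with 0%nat by lia. reflexivity. Qed.

Lemma uu_bound N h s j : 0 < s -> - (h j * h j) / s <= uu N h s j <= 0.
Proof. intros; apply U_bound; auto. Qed.

Lemma uu_pos N h s j : 0 < s -> s <= s - uu N h s j.
Proof. intros Hs. pose proof (uu_bound N h s j Hs). lra. Qed.

Lemma rsum_A h x j n : rsum n (fun k => Amat h j k * x k) =
  (if Nat.ltb (S j) n then h j * x (S j) else 0) +
  (match j with O => 0 | S j' => if Nat.ltb j' n then - h j' * x j' else 0 end).
Proof.
  induction n as [|n IH].
  - destruct j; simpl; ring.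
  - simpl rsum. rewrite IH. unfold Amat.
    destruct j as [|j'];
    repeat match goal with
    | |- context [Nat.ltb ?a ?b] => destruct (Nat.ltb_spec a b)
    | |- context [Nat.eqb ?a ?b] => destruct (Nat.eqb_spec a b)
    end; repeat match goal with H : S _ = S _ |- _ => injection H as H end; subst; try (exfalso; lia); try ring.
Qed.

Lemma row0 N h s x : sIA N h s x 0 = s * x 0%nat - h 0%nat * x 1%nat.
Proof.
  unfold sIA. rewrite rsum_A.
  destruct (Nat.ltb_spec 1 (N+2)); [|lia]. ring.
Qed.

Lemma rowS N h s x j : (S j <= N)%nat ->
  sIA N h s x (S j) = s * x (S j) - h (S j) * x (S (S j)) + h j * x j.
Proof.
  intros Hj. unfold sIA. rewrite rsum_A.
  destruct (Nat.ltb_spec (S (S j)) (N+2)); [|lia].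
  destruct (Nat.ltb_spec j (N+2)); [|lia]. ring.
Qed.

Lemma rowLast N h s x : sIA N h s x (S N) = s * x (S N) + h N * x N.
Proof.
  unfold sIA. rewrite rsum_A.
  destruct (Nat.ltb_spec (S (S N)) (N+2)); [lia|].
  destruct (Nat.ltb_spec N (N+2)); [|lia]. ring.
Qed.

Lemma down N h s x : 0 < s ->
  (forall j, (1 <= j <= N + 1)%nat -> sIA N h s x j = 0) ->
  forall j, (j <= N)%nat -> h j * x (S j) = uu N h s j * x j.
Proof.
  intros Hs Hrow.
  assert (K : forall m j, (j + m = N)%nat -> h j * x (S j) = uu N h s j * x j).
  { induction m as [|m IH]; intros j Hjm.
    - replace j with N by lia.
      pose proof (Hrow (S N) ltac:(lia)) as E. rewrite rowLast in E.
      rewrite uu_rec, uu_last by lia.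
      replace (x (S N)) with ((s * x (S N)) / s) by (field; lra).
      replace (s * x (S N)) with (- h N * x N) by lra. field. lra.
    - pose proof (IH (S j) ltac:(lia)) as IHj.
      pose proof (Hrow (S j) ltac:(lia)) as E. rewrite rowS in E by lia.
      pose proof (uu_pos N h s (S j) Hs).
      rewrite (uu_rec N h s j) by lia.
      set (d := s - uu N h s (S j)) in *.
      assert (E2 : d * x (S j) = - h j * x j) by (unfold d; lra).
      replace (x (S j)) with ((d * x (S j)) / d) by (field; lra).
      rewrite E2. field. lra. }
  intros j Hj. apply (K (N - j)%nat). lia.
Qed.

Lemma up N h s x : 0 < s ->
  (forall j, (1 <= j <= N + 1)%nat -> sIA N h s x j = 0) ->
  forall j, (j <= N)%nat -> (s - uu N h s (S j)) * x (S j) = - h j * x j.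
Proof.
  intros Hs Hrow j Hj.
  destruct (Nat.le_gt_cases (S j) N) as [H|H].
  - pose proof (down N h s x Hs Hrow (S j) H).
    pose proof (Hrow (S j) ltac:(lia)) as E. rewrite rowS in E by lia. lra.
  - replace j with N by lia. rewrite uu_last.
    pose proof (Hrow (S N) ltac:(lia)) as E. rewrite rowLast in E. lra.
Qed.

Definition F N h s := - h 0%nat / ((s - uu N h s 0) * (s - uu N h s 1)).

Lemma sol_x1 N h s x : 0 < s ->
  (forall j, (j < N + 2)%nat -> sIA N h s x j = if Nat.eqb j 0 then 1 else 0) ->
  x 1%nat = F N h s.
Proof.
  intros Hs Hx.
  assert (Hrow : forall j, (1 <= j <= N + 1)%nat -> sIA N h s x j = 0).
  { intros j Hj. rewrite Hx by lia. destruct j; [lia|reflexivity]. }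
  pose proof (down N h s x Hs Hrow 0 ltac:(lia)) as D0.
  pose proof (up N h s x Hs Hrow 0 ltac:(lia)) as U0.
  pose proof (Hx 0%nat ltac:(lia)) as R0. rewrite row0 in R0. simpl in R0.
  pose proof (uu_pos N h s 0 Hs). pose proof (uu_pos N h s 1 Hs).
  assert (X0 : (s - uu N h s 0) * x 0%nat = 1) by lra.
  unfold F.
  replace (x 1%nat) with (((s - uu N h s 1) * x 1%nat) / (s - uu N h s 1)) by (field; lra).
  rewrite U0.
  replace (x 0%nat) with (((s - uu N h s 0) * x 0%nat) / (s - uu N h s 0)) by (field; lra).
  rewrite X0. field. lra.
Qed.

Lemma resolvent N h s : 0 < s -> resolvent_defined N h s.
Proof.
  intros Hs x Hx.
  assert (Hrow : forall j, (1 <= j <= N + 1)%nat -> sIA N h s x j = 0).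
  { intros j Hj. apply Hx. lia. }
  pose proof (down N h s x Hs Hrow 0 ltac:(lia)) as D0.
  pose proof (Hx 0%nat ltac:(lia)) as R0. rewrite row0 in R0.
  pose proof (uu_pos N h s 0 Hs).
  assert (X0 : x 0%nat = 0).
  { assert ((s - uu N h s 0) * x 0%nat = 0) by lra.
    apply Rmult_integral in H0. destruct H0; [lra|auto]. }
  assert (K : forall j, (j <= N + 1)%nat -> x j = 0).
  { induction j as [|j IH]; intros Hj; auto.
    pose proof (up N h s x Hs Hrow j ltac:(lia)) as Uj.
    rewrite IH in Uj by lia. pose proof (uu_pos N h s (S j) Hs).
    assert ((s - uu N h s (S j)) * x (S j) = 0) by lra.
    apply Rmult_integral in H1. destruct H1; [lra|auto]. }
  intros j Hj. apply K. lia.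
Qed.

Fixpoint X N h s (j : nat) : R :=
  match j with
  | O => 1 / (s - uu N h s 0)
  | S j' => - h j' * X N h s j' / (s - uu N h s (S j'))
  end.

Lemma X_sol N h s : 0 < s ->
  forall j, (j < N + 2)%nat -> sIA N h s (X N h s) j = if Nat.eqb j 0 then 1 else 0.
Proof.
  intros Hs.
  assert (UP : forall j, (s - uu N h s (S j)) * X N h s (S j) = - h j * X N h s j).
  { intros j. simpl. pose proof (uu_pos N h s (S j) Hs). field. lra. }
  assert (DN : forall j, (j <= N)%nat -> h j * X N h s (S j) = uu N h s j * X N h s j).
  { intros j Hj. rewrite (uu_rec N h s j Hj). simpl.
    pose proof (uu_pos N h s (S j) Hs). field. lra. }
  intros j Hj. destruct j as [|j].
  - rewrite row0. simpl Nat.eqb. rewrite DN by lia. simpl.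
    pose proof (uu_pos N h s 0 Hs). field. lra.
  - simpl Nat.eqb. destruct (Nat.le_gt_cases (S j) N) as [H|H].
    + rewrite rowS by lia. rewrite DN by lia. pose proof (UP j). lra.
    + replace j with N by lia. rewrite rowLast. pose proof (UP N) as E.
      rewrite uu_last in E. lra.
Qed.

Lemma F_eq N h h' s : 0 < s -> same_transfer N h h' -> F N h s = F N h' s.
Proof.
  intros Hs ST.
  assert (T : transfer_value N h s (X N h s 1%nat)).
  { exists (X N h s). split; auto. apply X_sol; auto. }
  apply (ST s (resolvent N h s Hs) (resolvent N h' s Hs)) in T.
  destruct T as [x' [Hx' Hy]].
  rewrite <- (sol_x1 N h s (X N h s) Hs (X_sol N h s Hs)).
  rewrite Hy. apply sol_x1; auto.
Qed.

Lemma kill D K : (forall s, 0 < s -> Rabs D * (s * s) <= K) -> D = 0.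
Proof.
  intros H. destruct (Req_dec D 0) as [|HD]; auto. exfalso.
  pose proof (Rabs_pos_lt D HD) as P.
  pose proof (H 1 ltac:(lra)) as H1.
  set (s := (Rabs K + 1) / Rabs D + 1).
  assert (Hs1 : 1 <= s).
  { unfold s. assert (0 <= (Rabs K + 1) / Rabs D).
    { unfold Rdiv. apply Rmult_le_pos. pose proof (Rabs_pos K); lra.
      left; apply Rinv_0_lt_compat; lra. } lra. }
  assert (Hs2 : Rabs D * s > Rabs K + 1).
  { unfold s. replace (Rabs D * ((Rabs K + 1) / Rabs D + 1)) with (Rabs K + 1 + Rabs D)
      by (field; lra). lra. }
  pose proof (H s ltac:(lra)).
  pose proof (Rle_abs K). nra.
Qed.

Lemma step N h h' j : (S j <= N + 1)%nat -> (j <= N)%nat ->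
  (forall s, 0 < s -> uu N h s j = uu N h' s j) ->
  h j * h j = h' j * h' j /\
  (h j <> 0 -> forall s, 0 < s -> uu N h s (S j) = uu N h' s (S j)).
Proof.
  intros Hj1 Hj E.
  assert (C : forall s, 0 < s ->
    (h j * h j) * (s - uu N h' s (S j)) = (h' j * h' j) * (s - uu N h s (S j))).
  { intros s Hs. pose proof (E s Hs) as Es. rewrite !(uu_rec _ _ s j Hj) in Es.
    pose proof (uu_pos N h s (S j) Hs). pose proof (uu_pos N h' s (S j) Hs).
    set (a := s - uu N h s (S j)) in *. set (a' := s - uu N h' s (S j)) in *.
    apply (Rmult_eq_compat_l (- (a * a'))) in Es.
    replace (- (a * a') * (- (h j * h j) / a)) with ((h j * h j) * a') in Es by (field; lra).
    replace (- (a * a') * (- (h' j * h' j) / a')) with ((h' j * h' j) * a) in Es by (field; lra).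
    exact Es. }
  assert (D0 : h j * h j - h' j * h' j = 0).
  { apply (kill _ ((h j * h j) * (h' (S j) * h' (S j)) + (h' j * h' j) * (h (S j) * h (S j)))).
    intros s Hs. pose proof (C s Hs) as Cs.
    pose proof (uu_bound N h s (S j) Hs) as B. pose proof (uu_bound N h' s (S j) Hs) as B'.
    set (c := h j * h j) in *. set (c' := h' j * h' j) in *.
    set (e := h (S j) * h (S j)) in *. set (e' := h' (S j) * h' (S j)) in *.
    set (a := uu N h s (S j)) in *. set (a' := uu N h' s (S j)) in *.
    assert (0 <= c) by (unfold c; nra). assert (0 <= c') by (unfold c'; nra).
    assert (0 <= e) by (unfold e; nra). assert (0 <= e') by (unfold e'; nra).
    assert (Ba : - e <= a * s <= 0).
    { destruct B as [B1 B2]. split; [|nra].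
      replace (- e) with ((- e / s) * s) by (field; lra). nra. }
    assert (Ba' : - e' <= a' * s <= 0).
    { destruct B' as [B1 B2]. split; [|nra].
      replace (- e') with ((- e' / s) * s) by (field; lra). nra. }
    assert (Eq : (c - c') * (s * s) = c * (a' * s) - c' * (a * s)) by nra.
    replace (Rabs (c - c') * (s * s)) with (Rabs ((c - c') * (s * s))).
    2:{ rewrite Rabs_mult. rewrite (Rabs_right (s * s)); [ring|nra]. }
    apply Rabs_le. rewrite Eq. split; nra. }
  split; [lra|].
  intros Hz s Hs. pose proof (C s Hs) as Cs.
  assert (Ec : h' j * h' j = h j * h j) by lra. rewrite Ec in Cs.
  assert (0 < h j * h j) by (apply Rsqr_pos_lt in Hz; unfold Rsqr in Hz; lra).
  apply Rmult_eq_reg_l in Cs; lra.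
Qed.

Lemma rprod_zero d f j : (j < d)%nat -> f j = 0 -> rprod d f = 0.
Proof.
  induction d as [|d IH]; intros Hj Hf; [lia|]. simpl.
  destruct (Nat.eq_dec j d) as [->|Hne].
  - rewrite Hf. ring.
  - rewrite IH by (auto; lia). ring.
Qed.

Lemma rsum_zero M f : (forall k, f k = 0) -> rsum M f = 0.
Proof. intros H; induction M; simpl; [reflexivity|]. rewrite IHM, H. ring. Qed.

Lemma bound_ex d (h : nat -> R) : exists n, forall j, (j < d)%nat -> Rabs (h j) <= INR n.
Proof.
  induction d as [|d [n IH]].
  - exists 0%nat. intros; lia.
  - destruct (INR_unbounded (Rabs (h d))) as [m Hm].
    exists (Nat.max n m). intros j Hj.
    destruct (Nat.eq_dec j d) as [->|Hne].
    + pose proof (le_INR m (Nat.max n m) ltac:(lia)). lra.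
    + pose proof (le_INR n (Nat.max n m) ltac:(lia)). pose proof (IH j ltac:(lia)). lra.
Qed.

Theorem theorem1 (N : nat) (HN : (1 <= N)%nat) :
  exists Z : (nat -> R) -> Prop,
    lebesgue_null (N + 1) Z /\
    forall h h' : nat -> R,
      ~ Z h -> ~ Z h' ->
      h 0%nat = h' 0%nat -> h 1%nat = h' 1%nat ->
      same_transfer N h h' ->
      forall i : nat, (2 <= i <= N)%nat -> Rabs (h i) = Rabs (h' i).
Proof.
  exists (fun h => exists i, (i <= N)%nat /\ h i = 0). split.
  - intros eps Heps.
    exists (fun k i => if Nat.eqb i (k mod (N + 1)) then 0 else - INR k).
    exists (fun k i => if Nat.eqb i (k mod (N + 1)) then 0 else INR k).
    split; [|split].
    + intros k i _. destruct (Nat.eqb i (k mod (N+1))); [lra|]. pose proof (pos_INR k). lra.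
    + intros M. rewrite rsum_zero; [lra|]. intros k.
      apply (rprod_zero _ _ (k mod (N + 1))). apply Nat.mod_upper_bound; lia.
      rewrite Nat.eqb_refl. ring.
    + intros h [i [Hi Hz]]. destruct (bound_ex (N + 1) h) as [n Hn].
      exists (i + n * (N + 1))%nat. intros j Hj.
      rewrite Nat.Div0.mod_add, Nat.mod_small by lia.
      destruct (Nat.eqb_spec j i) as [->|Hne]; [lra|].
      pose proof (Hn j Hj). pose proof (le_INR n (i + n * (N + 1)) ltac:(nia)).
      split_Rabs; lra.
  - intros h h' nZ nZ' E0 E1 ST i Hi.
    assert (NZ : forall j, (j <= N)%nat -> h j <> 0).
    { intros j Hj Hz; apply nZ; exists j; auto. }
    assert (FE : forall s, 0 < s -> F N h s = F N h' s) by (intros; apply F_eq; auto).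
    assert (U1 : forall s, 0 < s -> uu N h s 1 = uu N h' s 1).
    { intros s Hs. pose proof (FE s Hs) as Fs. unfold F in Fs. rewrite <- E0 in Fs.
      pose proof (uu_pos N h s 0 Hs). pose proof (uu_pos N h s 1 Hs).
      pose proof (uu_pos N h' s 0 Hs). pose proof (uu_pos N h' s 1 Hs).
      assert (P : forall g, g 0%nat = h 0%nat ->
        (s - uu N g s 0) * (s - uu N g s 1) = s * (s - uu N g s 1) + h 0%nat * h 0%nat).
      { intros g Hg. rewrite (uu_rec N g s 0) by lia. rewrite Hg.
        pose proof (uu_pos N g s 1 Hs). field. lra. }
      rewrite (P h eq_refl), (P h' (eq_sym E0)) in Fs.
      assert (Hh0 : h 0%nat <> 0) by (apply NZ; lia).
      unfold Rdiv in Fs. apply Rmult_eq_reg_l in Fs; [|lra].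
      assert (Q : s * (s - uu N h s 1) + h 0%nat * h 0%nat =
                  s * (s - uu N h' s 1) + h 0%nat * h 0%nat).
      { rewrite <- (Rinv_inv (_ + _)), Fs, Rinv_inv. reflexivity. }
      assert (s * (uu N h s 1 - uu N h' s 1) = 0) by lra.
      apply Rmult_integral in H3. destruct H3; lra. }
    assert (K : forall m, (S m <= N)%nat ->
      h (S m) * h (S m) = h' (S m) * h' (S m) /\
      forall s, 0 < s -> uu N h s (S m) = uu N h' s (S m)).
    { induction m as [|m IH]; intros Hm.
      - split; auto. apply (step N h h' 1 ltac:(lia) ltac:(lia) U1).
      - destruct (IH ltac:(lia)) as [_ IHu].
        destruct (step N h h' (S m) ltac:(lia) ltac:(lia) IHu) as [_ St].
        pose proof (St (NZ (S m) ltac:(lia))) as Us.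
        split; auto. apply (step N h h' (S (S m)) ltac:(lia) ltac:(lia) Us). }
    destruct i as [|i]; [lia|]. destruct (K i ltac:(lia)) as [Sq _].
    apply Rsqr_eq_abs_0. unfold Rsqr. exact Sq.
Qed.
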